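(* Let $\Omega=(a_1,b_1)\times\cdots\times(a_n,b_n)\subset\mathbb{R}^n$ be a bounded box. There is a constant $C_H\in(0,4]$ such that for every admissible mesh size vector $h$ and all $u\in W_0^{1,2}(\overline{\Omega}_h)$, $$\sum_{x\in\Omega_h}\frac{u(x)^2}{\operatorname{dist}(x,\partial\Omega_h)^2}\mathbf{h}\le C_H\sum_{i=1}^n\sum_{x\in\overline{\Omega}_h\setminus\partial_i^+\Omega_h}|D_i^+u(x)|^2\mathbf{h}.$$
   Context: Admissible mesh: $h_i>0$, $a_i=k_ih_i$, $b_i=l_ih_i$, $k_i,l_i\in\mathbb{Z}$, $l_i-k_i>1$; $\mathbb{R}^n_h=\{(h_1z_1,\dots,h_nz_n):z_i\in\mathbb{Z}\}$, $\overline{\Omega}_h=\overline{\Omega}\cap\mathbb{R}^n_h$, $\Omega_h=\Omega\cap\mathbb{R}^n_h$, $\partial\Omega_h=\partial\Omega\cap\mathbb{R}^n_h$, $\partial_i^+\Omega_h=\partial\Omega_h\cap\{x_i=b_i\}$, $\mathbf{h}=h_1\cdots h_n$, $D_i^+u(x)=(u(x+h_ie_i)-u(x))/h_i$. $W_0^{1,2}(\overline{\Omega}_h)$ = functions $u:\overline{\Omega}_h\to\mathbb{R}$ vanishing on $\partial\Omega_h$. $\operatorname{dist}(x,\partial\Omega_h)$ is the Euclidean distance from $x$ to the set $\partial\Omega_h$. *)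

(* Defs.v *)
From HB Require Import structures.
From mathcomp Require Import all_boot all_order all_algebra.
From mathcomp Require Import boolp classical_sets fsbigop reals.
Set Implicit Arguments. Unset Strict Implicit. Unset Printing Implicit Defensive.
Import Order.TTheory GRing.Theory Num.Theory.
Local Open Scope ring_scope.
Local Open Scope classical_set_scope.

Section Grid.
Variables (R : realType) (n : nat).
Implicit Types (a b h : 'I_n -> R) (x y : 'rV[R]_n).

Definition admissible a b h : Prop :=
  forall i, 0 < h i /\ exists k l : int,
    a i = h i * k%:~R /\ b i = h i * l%:~R /\ (1 < l - k)%R.

Definition lattice h : set 'rV[R]_n :=
  [set x | exists z : 'I_n -> int, forall i, x ord0 i = h i * (z i)%:~R].

Definition box_open a b : set 'rV[R]_n := [set x | forall i, a i < x ord0 i < b i].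
Definition box_closed a b : set 'rV[R]_n := [set x | forall i, a i <= x ord0 i <= b i].
Definition box_bdry a b : set 'rV[R]_n := box_closed a b `\` box_open a b.

Definition Omega_h a b h := box_open a b `&` lattice h.
Definition Omegabar_h a b h := box_closed a b `&` lattice h.
Definition bdry_h a b h := box_bdry a b `&` lattice h.
Definition bdry_plus_h a b h (i : 'I_n) := bdry_h a b h `&` [set x | x ord0 i = b i].

Definition W0 a b h (u : 'rV[R]_n -> R) : Prop := forall x, bdry_h a b h x -> u x = 0.

Definition Dplus h (i : 'I_n) (u : 'rV[R]_n -> R) x : R :=
  (u (x + h i *: delta_mx ord0 i) - u x) / h i.

Definition eucl_dist x y : R := Num.sqrt (\sum_(i < n) (x ord0 i - y ord0 i) ^+ 2).
Definition dist_set x (S : set 'rV[R]_n) : R := inf [set eucl_dist x y | y in S].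

Definition hvol h : R := \prod_(i < n) h i.
End Grid.

(* Main.v *)
Require Import Defs.
From HB Require Import structures.
From mathcomp Require Import all_boot all_order all_algebra.
From mathcomp Require Import boolp classical_sets fsbigop reals.
From mathcomp Require Import ring lra zify.
Set Implicit Arguments. Unset Strict Implicit. Unset Printing Implicit Defensive.
Import Order.TTheory GRing.Theory Num.Theory.
Local Open Scope ring_scope.
Local Open Scope classical_set_scope.

Definition shS n K (i : 'I_n) (j : {ffun 'I_n -> 'I_K}) : {ffun 'I_n -> 'I_K} :=
  [ffun m => if m == i then ordS (j m) else j m].
Definition shP n K (i : 'I_n) (j : {ffun 'I_n -> 'I_K}) : {ffun 'I_n -> 'I_K} :=
  [ffun m => if m == i then ord_pred (j m) else j m].

Lemma shSK n K (i : 'I_n) : cancel (@shS n K i) (@shP n K i).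
Proof. by move=> j; apply/ffunP => m; rewrite !ffunE; case: eqP => // _; rewrite ordSK. Qed.
Lemma shPK n K (i : 'I_n) : cancel (@shP n K i) (@shS n K i).
Proof. by move=> j; apply/ffunP => m; rewrite !ffunE; case: eqP => // _; rewrite ord_predK. Qed.

Lemma shS_i n K (i : 'I_n) (j : {ffun 'I_n -> 'I_K}) : ((j i).+1 < K)%N -> (shS i j i : nat) = (j i).+1.
Proof. by move=> h; rewrite ffunE eqxx /= modn_small. Qed.
Lemma shP_i n K (i : 'I_n) (j : {ffun 'I_n -> 'I_K}) : (0 < j i)%N -> (shP i j i : nat) = (j i).-1.
Proof.
move=> h; rewrite ffunE eqxx /=.
have jK := ltn_ord (j i).
by rewrite -subn1 addnC -addnBA // modnDl modn_small //; case: (nat_of_ord (j i)) h jK => // t _ /ltnW; rewrite subn1.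
Qed.
Lemma shS_ne n K (i m : 'I_n) (j : {ffun 'I_n -> 'I_K}) : m != i -> shS i j m = j m.
Proof. by rewrite ffunE => /negbTE ->. Qed.
Lemma shP_ne n K (i m : 'I_n) (j : {ffun 'I_n -> 'I_K}) : m != i -> shP i j m = j m.
Proof. by rewrite ffunE => /negbTE ->. Qed.
Lemma alg (R : realFieldType) (s : nat) (A B : R) : (s = 0%N -> B = 0) ->
  A ^+ 2 / (s.+1)%:R ^+ 2 <= 4 * (A - B) ^+ 2 + 2 * B ^+ 2 / s%:R - 2 * A ^+ 2 / (s.+1)%:R.
Proof.
case: s => [/(_ erefl) -> | s _].
  rewrite subr0 expr0n /= mulr0 mul0r addr0 expr1n !divr1; nra.
set x : R := s.+1%:R.
have -> : (s.+2)%:R = x + 1 by rewrite /x -natr1.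
have x0 : 0 < x by rewrite /x ltr0n.
rewrite -subr_ge0.
have -> : 4 * (A - B) ^+ 2 + 2 * B ^+ 2 / x - 2 * A ^+ 2 / (x + 1) - A ^+ 2 / (x + 1) ^+ 2
   = (2 * (x * A - (x+1) * B) ^+ 2 + x * (A - 2 * (x+1) * (A - B)) ^+ 2) / (x * (x+1) ^+ 2).
  field; apply/andP; split; lra.
apply: divr_ge0; last by nra.
have := sqr_ge0 (x * A - (x+1) * B); have := sqr_ge0 (A - 2 * (x+1) * (A - B)); nra.
Qed.

Lemma core (R : realFieldType) (n K : nat) (N : 'I_n -> nat) (i : 'I_n)
  (w : {ffun 'I_n -> 'I_K} -> R) :
  (N i < K)%N -> (forall j : {ffun 'I_n -> 'I_K}, ((j i : nat) == 0%N) || (N i <= j i)%N -> w j = 0) ->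
  \sum_(j : {ffun 'I_n -> 'I_K}) w j ^+ 2 / ((minn (j i) (N i - j i))%:R ^+ 2) <=
  4 * \sum_(j : {ffun 'I_n -> 'I_K}) (if (j i < N i)%N then (w (shS i j) - w j) ^+ 2 else 0).
Proof.
move=> NK w0.
pose B (j : {ffun 'I_n -> 'I_K}) := if (j i < N i)%N then (w (shS i j) - w j) ^+ 2 else 0.
pose P (j : {ffun 'I_n -> 'I_K}) := if (2 * j i <= N i)%N then 2 * w j ^+ 2 / (j i)%:R else 0.
pose P' (j : {ffun 'I_n -> 'I_K}) := if (N i < 2 * j i)%N then 2 * w j ^+ 2 / (N i - j i)%:R else 0.
have B0 (j : {ffun 'I_n -> 'I_K}) : 0 <= B j by rewrite /B; case: ifP => // _; exact: sqr_ge0.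
have P0 (j : {ffun 'I_n -> 'I_K}) : 0 <= P j.
  rewrite /P; case: ifP => // _; apply: divr_ge0 => //; apply: mulr_ge0 => //; exact: sqr_ge0.
have P'0 (j : {ffun 'I_n -> 'I_K}) : 0 <= P' j.
  rewrite /P'; case: ifP => // _; apply: divr_ge0 => //; apply: mulr_ge0 => //; exact: sqr_ge0.
have pt (j : {ffun 'I_n -> 'I_K}) : w j ^+ 2 / ((minn (j i) (N i - j i))%:R ^+ 2) <=
   4 * ((if (2 * j i <= N i)%N then B (shP i j) else 0) + (if (N i < 2 * j i)%N then B j else 0))
   + (P (shP i j) - P j) + (P' (shS i j) - P' j).
  have [wj0|wjn0] := eqVneq (w j) 0.
    have -> : P j = 0 by rewrite /P wj0; case: ifP => //; rewrite expr0n mulr0 mul0r.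
    have -> : P' j = 0 by rewrite /P' wj0; case: ifP => //; rewrite expr0n mulr0 mul0r.
    rewrite wj0 expr0n /= mul0r !subr0; apply: addr_ge0; [apply: addr_ge0 => //|by []].
    apply: mulr_ge0 => //; apply: addr_ge0; case: ifP => //.
  have jpos : (0 < j i)%N by case: (ltnP 0 (j i)) => // ?; move: wjn0; rewrite (w0 j) ?eqxx //; lia.
  have jlt : (j i < N i)%N by case: (ltnP (j i) (N i)) => // ?; move: wjn0; rewrite (w0 j) ?eqxx //; lia.
  case: (leqP (2 * j i) (N i)) => hle.
    have hmin : minn (j i) (N i - j i)%N = j i by apply/minn_idPl; lia.
    have hPi : (shP i j i : nat) = (j i).-1 by rewrite shP_i.
    have -> : P j = 2 * w j ^+ 2 / (j i)%:R by rewrite /P hle.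
    have -> : P (shP i j) = 2 * w (shP i j) ^+ 2 / ((j i).-1)%:R.
      by rewrite /P hPi ifT //; lia.
    have -> : B (shP i j) = (w j - w (shP i j)) ^+ 2.
      by rewrite /B hPi ifT ?shPK //; lia.
    have -> : P' j = 0 by rewrite /P' ifF //; lia.
    rewrite hmin addr0 subr0.
    have := @alg R (j i).-1 (w j) (w (shP i j)).
    rewrite prednK //; move/(_ _)=> H.
    have {}H := H (fun e => w0 _ (introT orP (or_introl (introT eqP (etrans hPi e))))).
    by apply: le_trans H _; rewrite addrA lerDl.
  have hmin : minn (j i) (N i - j i) = (N i - j i)%N by apply/minn_idPr; lia.
  have hSi : (shS i j i : nat) = (j i).+1 by rewrite shS_i //; lia.
  have -> : P' j = 2 * w j ^+ 2 / (N i - j i)%:R by rewrite /P' hle.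
  have -> : P' (shS i j) = 2 * w (shS i j) ^+ 2 / ((N i - j i).-1)%:R.
    by rewrite /P' hSi ifT //; [congr (_ / _%:R); lia | lia].
  have -> : B j = (w j - w (shS i j)) ^+ 2 by rewrite /B jlt -sqrrN opprB.
  have -> : P j = 0 by rewrite /P ifF //; lia.
  rewrite hmin add0r subr0.
  have := @alg R (N i - j i).-1 (w j) (w (shS i j)).
  have -> : (N i - j i).-1.+1 = (N i - j i)%N by lia.
  move/(_ _)=> H.
  have {}H : w j ^+ 2 / (N i - j i)%:R ^+ 2 <=
    4 * (w j - w (shS i j)) ^+ 2 + 2 * w (shS i j) ^+ 2 / (N i - j i).-1%:R -
    2 * w j ^+ 2 / (N i - j i)%:R.
    by apply: H => e; apply: w0; apply/orP; right; rewrite hSi; lia.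
  by apply: le_trans H _; rewrite -!addrA lerD2l lerDr.
apply: le_trans (ler_sum _ (fun j _ => pt j)) _.
have eP : \sum_(j : {ffun 'I_n -> 'I_K}) P (shP i j) = \sum_j P j.
  rewrite [LHS](reindex_inj (can_inj (@shSK n K i))) /=.
  by apply: eq_bigr => j _; rewrite shSK.
have eP' : \sum_(j : {ffun 'I_n -> 'I_K}) P' (shS i j) = \sum_j P' j.
  rewrite [LHS](reindex_inj (can_inj (@shPK n K i))) /=.
  by apply: eq_bigr => j _; rewrite shPK.
have eB : \sum_(j : {ffun 'I_n -> 'I_K}) (if (2 * j i <= N i)%N then B (shP i j) else 0)
   = \sum_(j : {ffun 'I_n -> 'I_K}) (if (2 * shS i j i <= N i)%N then B j else 0).
  rewrite [LHS](reindex_inj (can_inj (@shSK n K i))) /=.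
  by apply: eq_bigr => j _; rewrite shSK.
rewrite !big_split /= !sumrN eP eP' !subrr !addr0 -mulr_sumr ler_wpM2l // big_split /= eB.
rewrite -big_split /=; apply: ler_sum => j _.
rewrite /B; case hj: (j i < N i)%N; last by rewrite !if_same addr0.
have hSi : (shS i j i : nat) = (j i).+1 by rewrite shS_i //; lia.
rewrite hSi; case: ifP => h1; case: ifP => h2; rewrite ?add0r ?addr0 ?sqr_ge0 //; lia.
Qed.

Lemma fsum_fin (R : realType) (J : finType) (T : choiceType) (phi : J -> T) (S : set T)
  (P : pred J) (F : T -> R) :
  injective phi -> (forall x, S x -> exists j, x = phi j) -> (forall j, S (phi j) <-> P j) ->
  \sum_(x \in S) F x = \sum_(j | P j) F (phi j).
Proof.
move=> inj hr hP.
have -> : S = phi @` [set j | P j].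
  apply/seteqP; split => [x Sx|x [j Pj <-]]; last by apply/hP.
  by case: (hr x Sx) => j xj; exists j => //; apply/hP; rewrite -xj.
rewrite fsbig_image; last by move=> ? ? _ _ /inj.
rewrite -(@bigfs _ _ _ _ (index_enum J) P (fun j => F (phi j)) (index_enum_uniq J)) //.
by move=> i _; rewrite mem_index_enum.
Qed.

Section Geo.
Variables (R : realType) (n : nat) (a b h : 'I_n -> R) (k l : 'I_n -> int).
Hypothesis hpos : forall i, 0 < h i.
Hypothesis ha : forall i, a i = h i * (k i)%:~R.
Hypothesis hb : forall i, b i = h i * (l i)%:~R.
Hypothesis hkl : forall i, (1 < l i - k i)%R.
Hypothesis n0 : (0 < n)%N.

Definition NN i : nat := `|l i - k i|%N.
Definition KK := (\max_(i < n) NN i).+2.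
Notation J := {ffun 'I_n -> 'I_KK}.

Lemma NNE i : (NN i)%:Z = l i - k i.
Proof. by rewrite /NN gez0_abs //; apply: ltW; apply: lt_trans (hkl i). Qed.

Lemma NNK i : (NN i < KK)%N.
Proof. by rewrite /KK ltnS ltnW // ltnS (leq_bigmax i). Qed.

Lemma NN2 i : (2 <= NN i)%N.
Proof. have := hkl i; rewrite -NNE; lia. Qed.

Definition phi (j : J) : 'rV[R]_n := \row_m (h m * (k m + (j m : nat)%:Z)%:~R).

Lemma phiE j m : phi j ord0 m = a m + h m * (j m)%:R.
Proof. by rewrite mxE intrD ha mulrDr. Qed.

Lemma bE m : b m = a m + h m * (NN m)%:R.
Proof.
rewrite hb ha -mulrDr; congr (_ * _).
by rewrite -[(NN m)%:R]/((NN m)%:Z%:~R) NNE intrB addrC subrK.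
Qed.

Definition closedb (j : J) := [forall m, (j m <= NN m)%N].
Definition openb (j : J) := [forall m, (0 < j m < NN m)%N].

Lemma closedP j : box_closed a b (phi j) <-> closedb j.
Proof.
split => [H|/forallP H m]; first apply/forallP => m.
  have := H m; rewrite !phiE bE => /andP[_].
  by rewrite lerD2l ler_pM2l // ler_nat.
rewrite !phiE bE lerDl lerD2l ler_pM2l // ler_nat H andbT.
by apply: mulr_ge0 => //; apply: ltW.
Qed.

Lemma openP j : box_open a b (phi j) <-> openb j.
Proof.
split => [H|/forallP H m]; first apply/forallP => m.
  have := H m; rewrite !phiE bE => /andP[].
  by rewrite ltrDl ltrD2l !ltr_pM2l // pmulr_rgt0 // ltr0n ltr_nat => -> ->.
by rewrite !phiE bE ltrDl ltrD2l ltr_pM2l // pmulr_rgt0 // ltr0n ltr_nat.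
Qed.

Lemma lattP j : lattice h (phi j).
Proof. by exists (fun m => k m + (j m : nat)%:Z) => m; rewrite mxE. Qed.

Lemma phi_inj : injective phi.
Proof.
move=> j1 j2 e; apply/ffunP => m; apply: val_inj => /=.
have := congr1 (fun x : 'rV[R]_n => x ord0 m) e; rewrite /= !phiE => /addrI.
by move/(mulfI (lt0r_neq0 (hpos m)))/eqP; rewrite eqr_nat => /eqP.
Qed.

Lemma phi_onto x : Omegabar_h a b h x -> exists j, x = phi j.
Proof.
case=> cx [z hz].
have hzk m : (k m <= z m /\ z m - k m <= (NN m)%:Z)%R.
  have := cx m; rewrite hz ha hb !ler_pM2l // !ler_int => /andP[h1 h2].
  by split => //; rewrite NNE lerD2r.
exists [ffun m => inord `|z m - k m|%N].
apply/rowP => m; rewrite phiE ffunE inordK; last first.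
  apply: leq_ltn_trans (NNK m); case: (hzk m) => h1 h2.
  by rewrite -lez_nat gez0_abs // subr_ge0.
case: (hzk m) => h1 _.
rewrite hz ha -mulrDr; congr (_ * _).
rewrite -[(`|z m - k m|%N)%:R]/((`|z m - k m|%N)%:Z%:~R) gez0_abs ?subr_ge0 //.
by rewrite -intrD addrCA subrr addr0.
Qed.

Lemma OmegaP j : Omega_h a b h (phi j) <-> openb j.
Proof. split => [[/openP]|/openP o] //; split => //; exact: lattP. Qed.

Lemma open_closed j : openb j -> closedb j.
Proof. by move=> /forallP o; apply/forallP => m; case/andP: (o m) => _ /ltnW. Qed.

Lemma OmegabarP j : Omegabar_h a b h (phi j) <-> closedb j.
Proof. split => [[/closedP]|/closedP o] //; split => //; exact: lattP. Qed.

Lemma bdryP j : bdry_h a b h (phi j) <-> closedb j && ~~ openb j.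
Proof.
split => [[[/closedP c /openP o] _]|/andP[/closedP c /negP o]].
  by rewrite c; apply/negP.
by split; [split => // /openP|exact: lattP].
Qed.

Lemma phi_b i j : phi j ord0 i = b i <-> (j i : nat) = NN i.
Proof.
rewrite phiE bE; split => [/addrI/(mulfI (lt0r_neq0 (hpos i)))/eqP|->] //.
by rewrite eqr_nat => /eqP.
Qed.

Lemma DiffP i j : (Omegabar_h a b h `\` bdry_plus_h a b h i) (phi j) <->
  closedb j && ((j i : nat) != NN i).
Proof.
split => [[/OmegabarP c nb]|/andP[c /eqP ne]].
  rewrite c /=; apply/eqP => e; apply: nb; split; last by apply/phi_b.
  apply/bdryP; rewrite c /=; apply/negP => /forallP/(_ i).
  by rewrite e ltnn andbF.
by split; [apply/OmegabarP|move=> [_ /phi_b]].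
Qed.

Lemma Omega_sub x : Omega_h a b h x -> Omegabar_h a b h x.
Proof. by case=> o lt; split => // m; case/andP: (o m) => /ltW -> /ltW ->. Qed.

Definition mm i (j : J) : nat := minn (j i) (NN i - j i).

Lemma distP j : openb j ->
  (dist_set (phi j) (bdry_h a b h) ^+ 2)^-1 <= \sum_i ((h i * (mm i j)%:R) ^+ 2)^-1.
Proof.
move=> /[dup] oj /forallP o.
set S := \sum_i _.
have mpos i : 0 < h i * (mm i j)%:R.
  rewrite pmulr_rgt0 // ltr0n /mm; case/andP: (o i) => h1 h2; lia.
have S_ge i : ((h i * (mm i j)%:R) ^+ 2)^-1 <= S.
  rewrite /S (bigD1 i) //= lerDl sumr_ge0 // => m _.
  by rewrite invr_ge0 sqr_ge0.
have Spos : 0 < S.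
  apply: lt_le_trans (S_ge (Ordinal n0)).
  by rewrite invr_gt0 exprn_gt0.
set c := (Num.sqrt S)^-1.
have c0 : 0 < c by rewrite invr_gt0 sqrtr_gt0.
have c2 : c ^+ 2 = S^-1 by rewrite exprVn sqr_sqrtr // ltW.
have key y : bdry_h a b h y -> c <= eucl_dist (phi j) y.
  move=> [[cy noty] _].
  have [m hm] : exists m, y ord0 m = a m \/ y ord0 m = b m.
    apply: contra_notP noty => H m'.
    have /andP[h1 h2] := cy m'.
    rewrite !lt_neqAle h1 h2 !andbT; apply/andP; split; apply/eqP => e; apply: H; exists m'.
      by left.
    by right.
  have d_le : h m * (mm m j)%:R <= `|phi j ord0 m - y ord0 m|.
    case: (o m) => /andP[h1 h2].
    case: hm => ->; rewrite phiE ?bE.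
      rewrite addrAC subrr add0r ger0_norm; last by apply: mulr_ge0; [apply: ltW|].
      by rewrite ler_pM2l // ler_nat /mm geq_minl.
    rewrite distrC opprD addrACA subrr add0r -mulrBr -natrB; last by apply: ltnW.
    rewrite ger0_norm; last by apply: mulr_ge0; [apply: ltW|].
    by rewrite ler_pM2l // ler_nat /mm geq_minr.
  have eu : `|phi j ord0 m - y ord0 m| <= eucl_dist (phi j) y.
    rewrite /eucl_dist -sqrtr_sqr; apply: ler_wsqrtr.
    by rewrite (bigD1 m) //= lerDl sumr_ge0 // => *; exact: sqr_ge0.
  apply: le_trans eu; apply: le_trans d_le.
  have : S^-1 <= (h m * (mm m j)%:R) ^+ 2.
    by rewrite -lef_pV2 ?invrK ?S_ge // posrE ?invr_gt0 ?exprn_gt0 // mpos.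
  rewrite -c2 => hc; have := mpos m; nra.
have dne : [set eucl_dist (phi j) y | y in bdry_h a b h] !=set0.
  exists (eucl_dist (phi j) (\row_m a m)); exists (\row_m a m) => //.
  split; last by exists k => m; rewrite mxE ha.
  split.
    move=> m; rewrite mxE lexx /=; apply: ltW; rewrite bE ltrDl; apply: mulr_gt0 => //.
    by rewrite ltr0n; have := NN2 m; lia.
  by move=> /(_ (Ordinal n0)); rewrite mxE ltxx.
have dc : c <= dist_set (phi j) (bdry_h a b h).
  by apply: lb_le_inf dne _ => _ [y hy <-]; apply: key.
rewrite -[S]invrK -c2 lef_pV2 ?posrE ?exprn_gt0 //; last by apply: lt_le_trans dc.
have := c0; nra.
Qed.

Lemma phi_shS i (j : J) : (j i < NN i)%N -> phi j + h i *: delta_mx ord0 i = phi (shS i j).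
Proof.
move=> hj; apply/rowP => m; rewrite [LHS]mxE phiE [RHS]phiE !mxE /=.
have [->|ne] := eqVneq m i.
  rewrite mulr1 shS_i; first by rewrite -natr1 mulrDr mulr1 addrA.
  by apply: leq_ltn_trans (NNK i).
by rewrite mulr0 addr0 shS_ne.
Qed.

Lemma closed_shS i (j : J) : closedb j -> (j i < NN i)%N -> closedb (shS i j).
Proof.
move=> /forallP c hj; apply/forallP => m.
have [->|ne] := eqVneq m i; last by rewrite shS_ne.
by rewrite shS_i //; apply: leq_ltn_trans (NNK i).
Qed.

Lemma notopen_shS i (j : J) : ~~ closedb j -> (j i < NN i)%N -> ~~ openb j /\ ~~ openb (shS i j).
Proof.
move=> /forallPn [m]; rewrite -ltnNge => hm hj.
have ne : m != i by apply/eqP => e; move: hm; rewrite e; lia.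
split; apply/forallPn; exists m; rewrite ?shS_ne //; apply/negP => /andP[_]; lia.
Qed.

Lemma main_fixed (u : 'rV[R]_n -> R) : W0 a b h u ->
      \sum_(x \in Omega_h a b h)
         (u x ^+ 2 / dist_set x (bdry_h a b h) ^+ 2 * hvol h)
      <= 4 * \sum_(i < n) \sum_(x \in Omegabar_h a b h `\` bdry_plus_h a b h i)
                (`|Dplus h i u x| ^+ 2 * hvol h).
Proof.
move=> W.
pose w (j : J) := if openb j then u (phi j) else 0.
have wc j : closedb j -> w j = u (phi j).
  by rewrite /w; case: ifP => // no c; rewrite W //; apply/bdryP; rewrite c no.
have hv : 0 <= hvol h by apply: prodr_ge0 => i _; apply: ltW.
rewrite (@fsum_fin _ _ _ phi _ openb); last first.
- by move=> j; apply: OmegaP.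
- by move=> x /Omega_sub /phi_onto.
- exact: phi_inj.
have -> : \sum_(i < n) \sum_(x \in Omegabar_h a b h `\` bdry_plus_h a b h i)
                (`|Dplus h i u x| ^+ 2 * hvol h) =
   \sum_(i < n) (hvol h / h i ^+ 2 * \sum_(j : J) (if (j i < NN i)%N then (w (shS i j) - w j) ^+ 2 else 0)).
  apply: eq_bigr => i _.
  rewrite (@fsum_fin _ _ _ phi _ (fun j => closedb j && ((j i : nat) != NN i))); last first.
  - by move=> j; apply: DiffP.
  - by move=> x [/phi_onto].
  - exact: phi_inj.
  rewrite big_mkcond mulr_sumr; apply: eq_bigr => j _.
  case: ifP => hc.
    case/andP: hc => c ne.
    have hj : (j i < NN i)%N by move/forallP: c => /(_ i); rewrite leq_eqVlt (negbTE ne).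
    rewrite hj /Dplus phi_shS // wc ?closed_shS // wc // real_normK ?num_real //.
    rewrite expr_div_n; field; exact: lt0r_neq0.
  case: ifP => hj; last by rewrite mulr0.
  have nc : ~~ closedb j by apply/negP => c; move: hc; rewrite c /= => /negbT/negPn/eqP; lia.
  case: (notopen_shS nc hj) => o1 o2.
  by rewrite /w (negbTE o1) (negbTE o2) subrr expr0n mulr0.
apply: (@le_trans _ _ (\sum_(j | openb j) \sum_(i < n)
     (w j ^+ 2 / ((minn (j i) (NN i - j i))%:R ^+ 2) * (hvol h / h i ^+ 2)))).
  apply: ler_sum => j oj.
  have ej : u (phi j) = w j by rewrite /w oj.
  rewrite ej; apply: (@le_trans _ _ (w j ^+ 2 * (\sum_i ((h i * (mm i j)%:R) ^+ 2)^-1) * hvol h)).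
    by rewrite ler_wpM2r // ler_wpM2l ?sqr_ge0 // distP.
  rewrite mulr_sumr mulr_suml; apply: ler_sum => i _; rewrite le_eqVlt; apply/orP; left; apply/eqP.
  rewrite /mm exprMn invfM; ring.
rewrite exchange_big /= mulr_sumr; apply: ler_sum => i _.
rewrite -mulr_suml mulrC mulrCA ler_wpM2l //; first by apply: divr_ge0 => //; apply: sqr_ge0.
have HC := @core R n KK NN i w (NNK i).
have HC2 : forall j : J, ((j i : nat) == 0%N) || (NN i <= j i)%N -> w j = 0.
  move=> j hj; rewrite /w; case: ifP => // /forallP/(_ i); lia.
refine (le_trans _ (HC HC2)).
rewrite [leRHS](bigID openb) /= lerDl sumr_ge0 // => j no.
by rewrite /w (negbTE no) expr0n /= mul0r.
Qed.
End Geo.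

Theorem mainTheorem8 (R : realType) (n : nat) (a b : 'I_n -> R) :
  (0 < n)%N -> (forall i, a i < b i) ->
  exists CH : R, 0 < CH <= 4 /\
    forall h : 'I_n -> R, admissible a b h ->
    forall u : 'rV[R]_n -> R, W0 a b h u ->
      \sum_(x \in Omega_h a b h)
         (u x ^+ 2 / dist_set x (bdry_h a b h) ^+ 2 * hvol h)
      <= CH * \sum_(i < n) \sum_(x \in Omegabar_h a b h `\` bdry_plus_h a b h i)
                (`|Dplus h i u x| ^+ 2 * hvol h).
Proof.
move=> n0 _; exists 4; split; first by apply/andP; split => //; lra.
move=> h adm u W.
have /choice [kl Hkl] : forall i, exists p : int * int,
    a i = h i * p.1%:~R /\ b i = h i * p.2%:~R /\ (1 < p.2 - p.1)%R.
  by move=> i; case: (adm i) => _ [k0 [l0 H]]; exists (k0, l0).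
apply: (@main_fixed R n a b h (fun i => (kl i).1) (fun i => (kl i).2)) => //.
- by move=> i; case: (adm i).
- by move=> i; case: (Hkl i).
- by move=> i; case: (Hkl i) => _ [].
- by move=> i; case: (Hkl i) => _ [].
Qed.
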